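(* Let $G\in\mathbb{F}_3^{k\times n}$ be a matrix of rank $k$, let $B\subseteq\mathbb{F}_3^k$ be the set of columns of $G$ and let $C\subseteq\mathbb{F}_3^n$ be the row space of $G$. Then $C$ is a linear trifferent code if and only if $\{\vec 0\}\cup B\cup -B$ is a $2$-blocking set in $\mathbb{F}_3^k$.
   Context: A linear trifferent code is a linear subspace $C\subseteq\mathbb{F}_3^n$ such that for any three distinct $x,y,z\in C$ there is a coordinate $i$ with $\{x_i,y_i,z_i\}=\mathbb{F}_3$. A $2$-blocking set in $\mathbb{F}_3^k$ is a set of points meeting every affine subspace (translate of a vector subspace) of dimension $k-2$. *)

(* Defs.v *)
From mathcomp Require Import all_boot all_algebra.
Set Implicit Arguments. Unset Strict Implicit. Unset Printing Implicit Defensive.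
Import GRing.Theory.
Local Open Scope ring_scope.

Definition row_space (k n : nat) (G : 'M['F_3]_(k, n)) : {set 'rV['F_3]_n} :=
  [set c | (c <= G)%MS].

Definition trifferent (n : nat) (C : {set 'rV['F_3]_n}) : Prop :=
  forall x y z, x \in C -> y \in C -> z \in C ->
    x != y -> y != z -> x != z ->
    exists i : 'I_n, [set x 0 i; y 0 i; z 0 i] = [set: 'F_3].

Definition in_affine (k : nat) (a : 'rV['F_3]_k) (W : 'M['F_3]_k)
  (x : 'rV['F_3]_k) : bool := (x - a <= W)%MS.

Definition blocking2 (k : nat) (S : {set 'rV['F_3]_k}) : Prop :=
  forall (a : 'rV['F_3]_k) (W : 'M['F_3]_k), \rank W = (k - 2)%N ->
    exists2 x, x \in S & in_affine a W x.

Definition columns (k n : nat) (G : 'M['F_3]_(k, n)) : {set 'rV['F_3]_k} :=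
  [set (col j G)^T | j : 'I_n].

Definition negset (k : nat) (S : {set 'rV['F_3]_k}) : {set 'rV['F_3]_k} :=
  [set - x | x in S].

(* Main.v *)
Require Import Defs.
From mathcomp Require Import all_boot all_algebra zify.
Set Implicit Arguments. Unset Strict Implicit. Unset Printing Implicit Defensive.
Local Open Scope ring_scope.
Import GRing.Theory.

Definition Hcond k n (G : 'M['F_3]_(k,n)) := forall W : 'M['F_3]_k,
  \rank W = (k-2)%N -> forall e : 'rV['F_3]_k, ~~ (e <= W)%MS ->
  exists j : 'I_n, ((col j G)^T - e <= W)%MS \/ (((col j G)^T + e)%R <= W)%MS.

Lemma L1 (u v : 'F_3) : [set u; v; 0] = [set: 'F_3] -> u != 0 /\ u + v = 0.
Proof.
move/setP=> H.
have H0 := H (Ordinal (isT : 0 < 3)%N); have H1 := H (Ordinal (isT : 1 < 3)%N); have H2 := H (Ordinal (isT : 2 < 3)%N).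
move: H0 H1 H2; rewrite !inE; clear H.
case: u => [[|[|[|m]]] Hu] //; case: v => [[|[|[|m']]] Hv] //=.
all: try by split => //; apply/val_inj.
Qed.

Lemma L2 (u v w : 'F_3) : u - w != 0 -> (u - w) + (v - w) = 0 -> [set u; v; w] = [set: 'F_3].
Proof.
move=> H1 /eqP H2; apply/setP => t; rewrite !inE; move: H1 H2.
case: u => [[|[|[|m]]] Hu] //; case: v => [[|[|[|m']]] Hv] //=; case: w => [[|[|[|m'']]] Hw] //=;
case: t => [[|[|[|m''']]] Ht] //=.
Qed.

Lemma L3 (l : 'F_3) : l != 0 -> l = 1 \/ l = -1.
Proof. case: l => [[|[|[|m]]] Hl] //= _. by left; apply/val_inj. by right; apply/val_inj. Qed.

Lemma L4 (s : 'F_3) : s != 0 -> s != 0 - s.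
Proof. case: s => [[|[|[|m]]] Hl] //=. Qed.

Lemma L5 (p q : 'F_3) : p = - (p + q) -> q = p.
Proof.
move/eqP; case: p => [[|[|[|m]]] Hp] //; case: q => [[|[|[|m']]] Hq] //= _; exact/val_inj.
Qed.

Lemma F3cases (d : 'F_3) : d = 0 \/ d = 1 \/ d = -1.
Proof.
case: (eqVneq d 0) => [->|/L3 []]; [by left | by right; left | by right; right].
Qed.

Section S.
Variable F : fieldType.
Lemma dbl m (W : 'M[F]_m) : (kermx (kermx W^T)^T <= W)%MS.
Proof.
set K := kermx W^T.
have KW : K *m W^T = 0 by apply/sub_kermxP.
have WL : (W <= kermx K^T)%MS by apply/sub_kermxP; rewrite -[W]trmxK -trmx_mul KW trmx0.
have := mxrank_leqif_sup WL; case=> _ <-.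
by rewrite !mxrank_ker mxrank_tr mxrank_ker subKn ?rank_leq_col // mxrank_tr.
Qed.
Lemma m11 (A : 'M[F]_1) : A 0 0 = 0 -> A = 0.
Proof. move=> H; rewrite (mx11_scalar A) H; exact: raddf0. Qed.
Lemma mxBZE (A B : 'M[F]_1) l : (A - l *: B) 0 0 = A 0 0 - l * B 0 0.
Proof. by rewrite !mxE. Qed.
Lemma mxBE (A B : 'M[F]_1) : (A - B) 0 0 = A 0 0 - B 0 0.
Proof. by rewrite !mxE. Qed.
Lemma small_rank m k (A : 'M[F]_(m,k)) : (\rank A <= 1)%N ->
  exists c : 'rV_k, (c <= A)%MS /\ (A <= c)%MS.
Proof.
move=> rA; case: (eqVneq A 0) => [->|nz].
  by exists 0; rewrite !sub0mx.
have [i hi] : exists i, row i A != 0.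
  case: (pickP (fun i => row i A != 0)) => [i hi|h0]; first by exists i.
  exfalso; move/eqP: nz; apply; apply/row_matrixP => l; rewrite row0; exact/eqP/negbFE/h0.
exists (row i A); split; first exact: row_sub.
have := mxrank_leqif_sup (row_sub i A); case=> _ <-.
have : \rank A != 0%N by rewrite mxrank_eq0.
rewrite rank_rV hi /=; lia.
Qed.
End S.

Lemma colent k n (G : 'M['F_3]_(k,n)) (v : 'rV_k) j :
  (v *m G) 0 j = (v *m ((col j G)^T)^T) 0 0.
Proof. by rewrite trmxK !mxE; apply: eq_bigr => l _; rewrite !mxE. Qed.

Lemma Htrif k n (G : 'M['F_3]_(k,n)) : Hcond G -> trifferent (row_space G).
Proof.
move=> H x y z; rewrite !inE => hx hy hz nxy nyz nxz.
have ex := mulmxKpV hx; have ey := mulmxKpV hy; have ez := mulmxKpV hz.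
set xa := x *m pinvmx G in ex; set ya := y *m pinvmx G in ey; set za := z *m pinvmx G in ez.
set u := xa - za; set b := ya - za.
have uG : u *m G = x - z by rewrite mulmxBl ex ez.
have bG : b *m G = y - z by rewrite mulmxBl ey ez.
suff [i [hi1 hi2]] : exists i, (u *m G) 0 i != 0 /\ (u *m G) 0 i + (b *m G) 0 i = 0.
  by exists i; move: hi1 hi2; rewrite uG bG !mxE; exact: L2.
case: (eqVneq (u + b) 0) => hc.
- have nz : u *m G != 0 by rewrite uG subr_eq0.
  have [i hi] : exists i, (u *m G) 0 i != 0.
    case: (pickP (fun i => (u *m G) 0 i != 0)) => [i hi|h0]; first by exists i.
    exfalso; move/eqP: nz; apply; apply/rowP => i; rewrite [RHS]mxE; exact/eqP/negbFE/h0.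
  exists i; split => //.
  have bu : b = - u by rewrite -[b](addKr u) hc addr0.
  rewrite bu mulNmx; move: (u *m G) => w; by rewrite mxE subrr.
have nu : ~~ (u <= (u + b)%R)%MS.
  apply/negP => /submxP [D hD]; rewrite (mx11_scalar D) mul_scalar_mx in hD.
  case: (F3cases (D 0 0)) => [d0|[d1|d2]]; rewrite ?d0 ?d1 ?d2 in hD.
  + have : x - z = 0 by rewrite -uG hD scale0r mul0mx.
    by move/eqP; rewrite subr_eq0 (negbTE nxz).
  + have b0 : b = 0 by move: hD; rewrite scale1r => hD; apply: (@addrI _ u); rewrite addr0 -hD.
    have : y - z = 0 by rewrite -bG b0 mul0mx.
    by move/eqP; rewrite subr_eq0 (negbTE nyz).
  + have bu : b = u.
      apply/rowP => i; move/rowP: hD => /(_ i); rewrite scaleN1r !mxE; exact: L5.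
    have : x - z = y - z by rewrite -uG -bG bu.
    by move/addIr/eqP; rewrite (negbTE nxy).
set c := (u + b)%R in hc nu.
set M := col_mx c u.
have cM : (c <= M)%MS by rewrite /M -addsmxE addsmxSl.
have uM : (u <= M)%MS by rewrite /M -addsmxE addsmxSr.
have rM : \rank M = 2%N.
  have : (c < M)%MS by rewrite ltmxE cM /=; apply: contra nu => Mc; exact: submx_trans uM Mc.
  rewrite ltmxErank cM rank_rV hc /= => lt.
  have := rank_leq_row M; lia.
have fM : row_full M^T by rewrite /row_full mxrank_tr rM.
pose r : 'M['F_3]_(1, 1 + 1) := row_mx 0 1.
pose e := r *m pinvmx M^T.
have eM : e *m M^T = r := mulmxKpV (submx_full _ fM).
have [ec eu] : e *m c^T = 0 /\ e *m u^T = 1.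
  by apply: eq_row_mx; rewrite -mul_mx_row -tr_col_mx eM.
have ce : c *m e^T = 0 by rewrite -[c]trmxK -trmx_mul ec trmx0.
have ue : u *m e^T = 1 by rewrite -[u]trmxK -trmx_mul eu trmx1.
have rW : \rank (kermx M^T) = (k - 2)%N by rewrite mxrank_ker mxrank_tr rM.
have he : ~~ (e <= kermx M^T)%MS.
  rewrite sub_kermx eM; apply/eqP; rewrite -row_mx0 => /eq_row_mx [_ /eqP].
  by rewrite oner_eq0.
have [j hj] := H _ rW e he.
set g := (col j G)^T in hj.
have key : forall sg : 'F_3, sg != 0 -> ((g - sg *: e) <= kermx M^T)%MS ->
    exists i, (u *m G) 0 i != 0 /\ (u *m G) 0 i + (b *m G) 0 i = 0.
  move=> sg sg0 /sub_kermxP h.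
  have : M *m (g - sg *: e)^T = 0 by rewrite -[M]trmxK -trmx_mul h trmx0.
  rewrite mul_col_mx -col_mx0 => /eq_col_mx [h1 h2].
  have cg : (c *m g^T) 0 0 = 0.
    by move: h1; rewrite linearB linearZ /= mulmxBr -scalemxAr ce scaler0 subr0 => ->; rewrite mxE.
  have ug : (u *m g^T) 0 0 = sg.
    move/(congr1 (fun A : 'M_1 => A 0 0)): h2.
    have o : (1 : 'M['F_3]_1) 0 0 = 1 by rewrite mxE.
    have o' : (0 : 'M['F_3]_1) 0 0 = 0 by rewrite mxE.
    rewrite linearB linearZ /= mulmxBr -scalemxAr ue mxBZE o o' mulr1.
    by move/eqP; rewrite subr_eq0 => /eqP.
  exists j; rewrite !(colent G) -/g ug; split => //.
  have -> : b = c - u by rewrite /c addrAC subrr add0r.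
  by rewrite mulmxBl mxBE cg ug add0r subrr.
case: hj => hj.
- apply: (key 1); first exact: oner_neq0.
  by rewrite scale1r; apply: submx_trans hj _; rewrite -/g.
- apply: (key (-1)); first by rewrite oppr_eq0 oner_neq0.
  by rewrite scaleN1r opprK.
Qed.

Lemma trifH k n (G : 'M['F_3]_(k,n)) : \rank G = k -> trifferent (row_space G) -> Hcond G.
Proof.
move=> rG T W hW e he.
have rfG : row_free G by rewrite /row_free rG.
set K := kermx W^T.
have KW : K *m W^T = 0 by apply/sub_kermxP.
have dW := dbl W; rewrite -/K in dW.
have [i hi] : exists i, (row i K *m e^T) 0 0 != 0.
  case: (pickP (fun i => (row i K *m e^T) 0 0 != 0)) => [i hi|h0]; first by exists i.
  exfalso; move/negP: he; apply.
  have KE : K *m e^T = 0.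
    apply/row_matrixP => l; rewrite row_mul row0; apply: m11; exact/eqP/negbFE/h0.
  apply: submx_trans dW; apply/sub_kermxP; by rewrite -[e]trmxK -trmx_mul KE trmx0.
set a := row i K in hi; set s := (a *m e^T) 0 0 in hi.
have aW : a *m W^T = 0 by rewrite /a -row_mul KW row0.
set V := col_mx W e.
set K' := kermx V^T.
have rK' : (\rank K' <= 1)%N.
  rewrite mxrank_ker mxrank_tr.
  have WV : (W <= V)%MS by rewrite /V -addsmxE addsmxSl.
  have eV : (e <= V)%MS by rewrite /V -addsmxE addsmxSr.
  have : (W < V)%MS.
    by rewrite ltmxE WV /=; apply: contra he => VW; exact: submx_trans eV VW.
  rewrite ltmxErank WV hW /= => lt; lia.
have [c [cK' K'c]] := small_rank rK'.
have ce : c *m e^T = 0.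
  move/sub_kermxP: cK'; rewrite tr_col_mx mul_mx_row -row_mx0.
  by case/eq_row_mx.
set Z := K - (K *m e^T) *m (s^-1 *: a).
have ZV : (Z <= K')%MS.
  apply/sub_kermxP; rewrite tr_col_mx mul_mx_row -row_mx0; congr row_mx.
    by rewrite /Z mulmxBl KW -(mulmxA (K *m e^T)) -scalemxAl aW scaler0 mulmx0 subrr.
  rewrite /Z mulmxBl -(mulmxA (K *m e^T)) -scalemxAl [a *m e^T]mx11_scalar -/s.
  by rewrite scale_scalar_mx mulVf // mulmx1 subrr.
have [D hD] := submxP (submx_trans ZV K'c).
have Kdec : K = D *m c + (K *m e^T) *m (s^-1 *: a) by rewrite -hD /Z subrK.
have inC : forall v : 'rV_k, v *m G \in row_space G by move=> v; rewrite inE submxMl.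
have s_of : forall v w : 'rV['F_3]_k, v = w -> (v *m e^T) 0 0 = (w *m e^T) 0 0 by move=> v w ->.
have z0 : (0 : 'rV['F_3]_k) *m e^T = 0 by rewrite mul0mx.
have [j hj] : exists j, [set (a *m G) 0 j; ((c - a) *m G) 0 j; (0 : 'rV['F_3]_n) 0 j] = [set: 'F_3].
  apply: T; rewrite ?inE ?sub0mx ?submxMl //.
  - apply/negP => /eqP /(row_free_inj rfG) /s_of.
    rewrite mulmxBl mxBE ce -/s mxE => h; move: (L4 hi); by rewrite -h eqxx.
  - apply/negP => /eqP; rewrite -(mul0mx _ G) => /(row_free_inj rfG) /s_of.
    by rewrite mulmxBl mxBE ce -/s z0 !mxE => /eqP; rewrite sub0r oppr_eq0 (negbTE hi).
  - apply/negP => /eqP; rewrite -(mul0mx _ G) => /(row_free_inj rfG) /s_of.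
    by rewrite -/s z0 !mxE => /eqP; rewrite (negbTE hi).
have m0 : (0 : 'rV['F_3]_n) 0 j = 0 by rewrite mxE.
rewrite m0 in hj; have [h1 h2] := L1 hj.
rewrite !(colent G) in h1 h2.
set g := (col j G)^T in h1 h2.
have cg : (c *m g^T) 0 0 = 0 by move: h2; rewrite mulmxBl mxBE addrC subrK.
set lam := (a *m g^T) 0 0 / s.
have lam0 : lam != 0 by rewrite mulf_neq0 // invr_neq0.
set t := g - lam *: e.
have tW : (t <= W)%MS.
  apply: submx_trans dW; apply/sub_kermxP.
  rewrite -[t]trmxK -trmx_mul.
  suff -> : K *m t^T = 0 by rewrite trmx0.
  have ct : c *m t^T = 0.
    apply: m11; rewrite /t linearB linearZ /= mulmxBr -scalemxAr mxBZE cg ce mxE mulr0 subr0 //.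
  have atz : a *m t^T = 0.
    apply: m11; rewrite /t linearB linearZ /= mulmxBr -scalemxAr mxBZE -/s /lam mulfVK // subrr //.
  by rewrite Kdec mulmxDl -!mulmxA -scalemxAl ct atz scaler0 !mulmx0 addr0.
case: (L3 lam0) => hl; exists j; [left|right]; move: tW; rewrite /t hl.
- by rewrite scale1r.
- by rewrite scaleN1r opprK.
Qed.

Lemma subN m1 m2 n (A : 'M['F_3]_(m1,n)) (B : 'M['F_3]_(m2,n)) : (- A <= B)%MS = (A <= B)%MS.
Proof. by apply/idP/idP; apply: submx_trans; rewrite eqmx_opp. Qed.
Lemma blockH k n (G : 'M['F_3]_(k,n)) :
  blocking2 (0 |: (columns G :|: negset (columns G))) <-> Hcond G.
Proof.
split.
- move=> B W hW e he; have [x hx hxe] := B e W hW.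
  move: hx; rewrite /in_affine in hxe; rewrite !inE => /orP[/eqP x0|/orP[]].
  + by move: hxe; rewrite x0 sub0r subN (negbTE he).
  + case/imsetP => j _ xj; by exists j; left; rewrite -xj.
  + case/imsetP => y /imsetP[j _ yj] xy; rewrite yj in xy; exists j; right.
    by move: hxe; rewrite xy -opprD subN.
- move=> H a W hW; case: (boolP (a <= W)%MS) => ha.
  + by exists 0; rewrite ?inE ?eqxx // /in_affine sub0r subN.
  + have [j [hj|hj]] := H W hW a ha.
    * exists (col j G)^T => //; rewrite !inE; apply/orP; right; apply/orP; left.
      by apply/imsetP; exists j.
    * exists (- (col j G)^T); last by rewrite /in_affine -opprD subN.
      rewrite !inE; apply/orP; right; apply/orP; right.
      by apply/imsetP; exists (col j G)^T => //; apply/imsetP; exists j.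
Qed.

Unset Implicit Arguments.

Theorem theorem6p1 (k n : nat) (G : 'M['F_3]_(k, n)) :
  \rank G = k ->
  (trifferent (row_space G) <->
   blocking2 (0 |: (columns G :|: negset (columns G)))).
Proof.
move=> rG; rewrite blockH; split; [exact: trifH | exact: Htrif].
Qed.
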